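(* Let $M$ be a matroid on a finite set $E$, let $\mathcal{C}$ be a family of non-spanning circuits of $M$, and let $N$ be the free erection of $M$. Suppose every cyclic flat of $M$ is a union of circuits in $\mathcal{C}$. Then every cyclic flat of $N$ is a union of circuits in $\mathcal{C}$.
   Context: A cyclic set is a union of circuits; $\emptyset$ counts as cyclic. $M$ is the truncation of $N$ if $r_N(E)=r_M(E)+1$ and $r_M(X)=\min\{r_N(X),r_M(E)\}$ for all $X$. The free erection of $M$ is the maximum, in the weak order ($M_1\preceq M_2$ iff every independent set of $M_1$ is independent in $M_2$), of the set consisting of $M$ and all $N$ whose truncation is $M$. *)

(* Defs.v *)
From mathcomp Require Import all_boot.
Set Implicit Arguments. Unset Strict Implicit. Unset Printing Implicit Defensive.

Record matroid (T : finType) := Matroid {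
  indep : {set T} -> bool;
  indep0 : indep set0;
  indep_sub : forall I J : {set T}, J \subset I -> indep I -> indep J;
  indep_aug : forall I J : {set T}, indep I -> indep J -> #|I| < #|J| ->
                exists2 x, x \in J :\: I & indep (x |: I)
}.

Section MatroidDefs.
Variable T : finType.
Implicit Types (M N : matroid T) (X C : {set T}).

Definition rank M X : nat := \max_(I : {set T} | (I \subset X) && indep M I) #|I|.

Definition circuit M C : Prop :=
  ~~ indep M C /\ forall x, x \in C -> indep M (C :\ x).

Definition spanning M X : Prop := rank M X = rank M setT.

Definition flat M X : Prop :=
  forall x, x \notin X -> rank M X < rank M (x |: X).

Definition union_of (F : {set {set T}}) X : Prop :=
  exists2 G : {set {set T}}, G \subset F & X = \bigcup_(C in G) C.

(* cyclic: a union of circuits (the empty set is cyclic) *)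
Definition cyclic M X : Prop :=
  exists2 G : {set {set T}}, (forall C, C \in G -> circuit M C) &
    X = \bigcup_(C in G) C.

Definition cyclic_flat M X : Prop := cyclic M X /\ flat M X.

Definition truncation_of M N : Prop :=
  rank N setT = (rank M setT).+1 /\
  forall X, rank M X = minn (rank N X) (rank M setT).

Definition weak_le (M1 M2 : matroid T) : Prop :=
  forall I, indep M1 I -> indep M2 I.

(* the set consisting of M and all N whose truncation is M
   (matroids are identified when they have the same independent sets) *)
Definition erection_cand M N : Prop :=
  (forall I, indep N I = indep M I) \/ truncation_of M N.

Definition free_erection M N : Prop :=
  erection_cand M N /\ forall N', erection_cand M N' -> weak_le N' N.

End MatroidDefs.

(* Main.v *)
Require Import Defs.
From mathcomp Require Import all_boot zify.
Set Implicit Arguments. Unset Strict Implicit. Unset Printing Implicit Defensive.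

Section Basics.
Variable T : finType.
Variable M : matroid T.
Implicit Types X Y I J S D : {set T}.

Definition circuitb D := ~~ indep M D && [forall x in D, indep M (D :\ x)].
Lemma circuitP D : reflect (circuit M D) (circuitb D).
Proof.
apply: (iffP andP) => [[H1 /forall_inP H2]|[H1 H2]]; split=> //.
by apply/forall_inP.
Qed.

Lemma rank_le_card X : rank M X <= #|X|.
Proof. by apply/bigmax_leqP => I /andP[sIX _]; exact: subset_leq_card. Qed.

Lemma indep_le_rank X I : I \subset X -> indep M I -> #|I| <= rank M X.
Proof. by move=> sIX iI; rewrite /rank; apply: leq_bigmax_cond; rewrite sIX. Qed.

Lemma rank_of_max X I : I \subset X -> indep M I ->
  (forall z, z \in X -> z \notin I -> ~~ indep M (z |: I)) -> rank M X = #|I|.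
Proof.
move=> sIX iI Hmax; apply/eqP; rewrite eqn_leq indep_le_rank // andbT.
apply/bigmax_leqP => K /andP[sKX iK]; rewrite leqNgt; apply/negP => ltIK.
have [x /setDP[xK xI] ixI] := indep_aug iI iK ltIK.
by move: (Hmax x (subsetP sKX x xK) xI); rewrite ixI.
Qed.

Lemma extend X I : I \subset X -> indep M I -> exists J, [/\ I \subset J, J \subset X,
  indep M J & forall z, z \in X -> z \notin J -> ~~ indep M (z |: J)].
Proof.
move=> sIX iI.
pose P := fun J : {set T} => [&& I \subset J, J \subset X & indep M J].
have PI : P I by rewrite /P subxx sIX iI.
case: (@arg_maxnP _ I P (fun J => #|J|) PI) => J /and3P[sIJ sJX iJ] Jmax.
exists J; split=> // z zX zJ; apply/negP => izJ.
have : P (z |: J).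
  by rewrite /P izJ (subset_trans sIJ (subsetU1 _ _)) subUset sub1set zX sJX.
by move/Jmax; rewrite cardsU1 zJ /=; lia.
Qed.

Lemma rank_witness X : exists I, [/\ I \subset X, indep M I & #|I| = rank M X].
Proof.
have [J [_ sJX iJ Jmax]] := extend (sub0set X) (indep0 M).
by exists J; split => //; rewrite (rank_of_max sJX iJ Jmax).
Qed.

Lemma rank_mono X Y : X \subset Y -> rank M X <= rank M Y.
Proof.
move=> sXY; have [I [sIX iI <-]] := rank_witness X.
exact: indep_le_rank (subset_trans sIX sXY) iI.
Qed.

Lemma indep_rank I : indep M I -> rank M I = #|I|.
Proof. by move=> iI; apply/eqP; rewrite eqn_leq rank_le_card indep_le_rank. Qed.

Lemma rank_indep I : rank M I = #|I| -> indep M I.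
Proof.
move=> rI; have [J [sJI iJ cJ]] := rank_witness I.
have eJI : J == I.
  by rewrite eqEcard sJI cJ rI leqnn.
by rewrite -(eqP eJI).
Qed.

Lemma indep_card_rankT I : indep M I -> #|I| <= rank M setT.
Proof. by move=> iI; apply: indep_le_rank (subsetT _) iI. Qed.

Lemma circuit_exists S e : indep M S -> ~~ indep M (e |: S) ->
  exists D, [/\ circuit M D, e \in D & D \subset e |: S].
Proof.
move=> iS dS.
pose P := fun D => (D \subset e |: S) && ~~ indep M D.
have P0 : P (e |: S) by rewrite /P subxx.
case: (@arg_minnP _ _ P (fun D => #|D|) P0) => D /andP[sD iD] Dmin.
have eD : e \in D.
  apply/negPn/negP => eD; apply: (negP iD); apply: indep_sub iS.
  apply/subsetP => y yD; have := subsetP sD y yD; rewrite in_setU1.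
  by case/orP => [/eqP ye|//]; rewrite -ye yD in eD.
exists D; split => //; split => // x xD.
apply/negPn/negP => ixD.
have := Dmin (D :\ x); rewrite /P (subset_trans (subsetDl _ _) sD) ixD.
by move/(_ isT); rewrite [#|D|](cardsD1 x) xD /=; lia.
Qed.

Lemma closure_cf D : circuit M D -> exists F, [/\ cyclic_flat M F, D \subset F &
  forall y, y \in F -> rank M (y |: D) = rank M D].
Proof.
move=> cD.
pose F := [set y | rank M (y |: D) == rank M D].
have [I [sID iI cI]] := rank_witness D.
have DF : D \subset F.
  by apply/subsetP => y yD; rewrite inE; apply/eqP; congr (rank M _); apply/setUidPr; rewrite sub1set.
have dep : forall y, y \in F -> y \notin I -> ~~ indep M (y |: I).
  move=> y; rewrite inE => /eqP ry yI; apply/negP => iyI.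
  have := indep_le_rank (setUS [set y] sID) iyI.
  by rewrite ry -cI cardsU1 yI add1n ltnn.
have rF : rank M F = rank M D.
  by rewrite -cI; apply: rank_of_max => //; exact: subset_trans sID DF.
exists F; split => //; last by move=> y; rewrite inE => /eqP.
split.
- exists [set C | circuitb C && (C \subset F)].
    by move=> C; rewrite inE => /andP[/circuitP].
  apply/setP => y; apply/idP/bigcupP => [yF | [C]].
  + case yI: (y \in I).
      exists D; last exact: subsetP sID y yI.
      by rewrite inE DF andbT; apply/circuitP.
    have [C [cC yC sC]] := circuit_exists iI (dep y yF (negbT yI)).
    exists C => //; rewrite inE; apply/andP; split; first by apply/circuitP.
    by apply: (subset_trans sC); rewrite subUset sub1set yF (subset_trans sID DF).
  + by rewrite inE => /andP[_ sCF] yC; exact: subsetP sCF y yC.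
- move=> x xF; rewrite rF.
  have lt : rank M D < rank M (x |: D).
    rewrite ltn_neqAle rank_mono ?subsetU1 // andbT eq_sym.
    by move: xF; rewrite inE.
  by apply: (leq_trans lt); apply: rank_mono; apply: setUS.
Qed.

Lemma flat_closed X D y : flat M X -> D \subset X -> rank M (y |: D) = rank M D -> y \in X.
Proof.
move=> fX sDX ry; apply/negPn/negP => yX.
have [I [sID iI cI]] := rank_witness D.
have yI : y \notin I.
  by apply/negP => /(subsetP (subset_trans sID sDX)); rewrite (negbTE yX).
have dI : ~~ indep M (y |: I).
  apply/negP => iyI; have := indep_le_rank (setUS [set y] sID) iyI.
  by rewrite ry -cI cardsU1 yI add1n ltnn.
have [J [sIJ sJX iJ Jmax]] := extend (subset_trans sID sDX) iI.
have rX := rank_of_max sJX iJ Jmax.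
have lt := fX y yX; rewrite rX in lt.
have [K [sK iK cK]] := rank_witness (y |: X).
rewrite -cK in lt.
have [x /setDP[xK xJ] ixJ] := indep_aug iJ iK lt.
move: (subsetP sK x xK); rewrite in_setU1 => /orP[/eqP exy|xX].
  rewrite exy in ixJ; apply: (negP dI); apply: indep_sub ixJ; exact: setUS.
by move: (Jmax x xX xJ); rewrite ixJ.
Qed.

End Basics.

Section Trunc.
Variables (T : finType) (M N : matroid T).
Hypothesis trN : truncation_of M N.
Let r := rank M setT.
Implicit Types X Y I J S D : {set T}.

Lemma rNT : rank N setT = r.+1.
Proof. by case: trN. Qed.

Lemma trR X : rank M X = minn (rank N X) r.
Proof. by case: trN. Qed.

Lemma indepMN I : indep M I = indep N I && (#|I| <= r).
Proof.
apply/idP/andP.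
- move=> iI; have := indep_rank iI; rewrite trR => h.
  have le : #|I| <= r by rewrite -h geq_minr.
  split => //; apply: rank_indep; apply/eqP; rewrite eqn_leq rank_le_card /=.
  by rewrite -h geq_minl.
- case=> iI le; apply: rank_indep; rewrite trR (indep_rank iI).
  by apply/minn_idPl.
Qed.

Lemma indepN_le I : indep N I -> #|I| <= r.+1.
Proof. by move=> iI; rewrite -rNT; apply: indep_card_rankT. Qed.

Lemma indepNM I : indep N I -> #|I| <= r -> indep M I.
Proof. by move=> iI le; rewrite indepMN iI. Qed.

Lemma indepM_N I : indep M I -> indep N I.
Proof. by rewrite indepMN => /andP[]. Qed.

Lemma indepM_le I : indep M I -> #|I| <= r.
Proof. by rewrite indepMN => /andP[]. Qed.

Lemma Ncirc_Mcirc C e : circuit N C -> e \in C ->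
  exists D, [/\ circuit M D, e \in D & D \subset C].
Proof.
case=> dC hC eC.
have iC1 := hC e eC.
have cC : #|C| = (#|C :\ e|).+1 by rewrite (cardsD1 e C) eC.
have le1 := indepN_le iC1.
case: (leqP #|C :\ e| r) => [le|gt].
- have iM := indepNM iC1 le.
  have dM : ~~ indep M (e |: (C :\ e)).
    by rewrite setD1K // indepMN (negbTE dC).
  have [D [cD eD sD]] := circuit_exists iM dM.
  by exists D; split => //; rewrite setD1K in sD.
- have [z zC] : exists z, z \in C :\ e.
    by apply/set0Pn; rewrite -card_gt0; lia.
  have cS : #|C :\ e| = (#|C :\ e :\ z|).+1 by rewrite (cardsD1 z (C :\ e)) zC.
  have iS : indep N (C :\ e :\ z) by apply: indep_sub iC1; apply: subsetDl.
  have iMS : indep M (C :\ e :\ z) by apply: indepNM => //; lia.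
  have eS : e \notin C :\ e :\ z by rewrite !in_setD1 eqxx andbF.
  have dM : ~~ indep M (e |: (C :\ e :\ z)).
    by rewrite indepMN cardsU1 eS /=; apply/nandP; right; lia.
  have [D [cD eD sD]] := circuit_exists iMS dM.
  exists D; split => //; apply: (subset_trans sD).
  by rewrite subUset sub1set eC (subset_trans (subsetDl _ _) (subsetDl _ _)).
Qed.

Lemma circ_le D : circuit M D -> #|D| <= r.+1.
Proof.
case=> dD hD.
have [x xD] : exists x, x \in D.
  by apply/set0Pn; apply/negP => /eqP D0; rewrite D0 indep0 in dD.
have := indepM_le (hD x xD); rewrite (cardsD1 x D) xD; lia.
Qed.

Section Erect.
Variables (e : T) (X : {set T}).
Hypothesis fX : flat N X.
Hypothesis notA : forall D, circuit M D -> e \in D -> D \subset X -> r < #|D|.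

Definition indep' I := indep N I || [&& circuitb M I, e \in I & I \subset X].

Lemma circA D : circuit M D -> e \in D -> D \subset X -> #|D| = r.+1.
Proof. move=> cD eD sD; have := notA cD eD sD; have := circ_le cD; lia. Qed.

Lemma indep'_le I : indep' I -> #|I| <= r.+1.
Proof.
case/orP => [/indepN_le //|/and3P[/circuitP cI _ _]]; exact: circ_le.
Qed.

Lemma indep'0 : indep' set0.
Proof. by rewrite /indep' indep0. Qed.

Lemma indep'_sub I J : J \subset I -> indep' I -> indep' J.
Proof.
move=> sJI /orP[iN|/and3P[cIb eI sIX]].
  by rewrite /indep' (indep_sub sJI iN).
case: (eqVneq J I) => [->|neq]; first by rewrite /indep' cIb eI sIX orbT.
have nsIJ : ~~ (I \subset J).
  by apply/negP => sIJ; move: neq; rewrite (eqP (_ : J == I)) ?eqxx // eqEsubset sJI sIJ.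
have [y yI yJ] := subsetPn nsIJ.
have sJy : J \subset I :\ y.
  apply/subsetP => z zJ; rewrite in_setD1 (subsetP sJI z zJ) andbT.
  by apply/negP => /eqP zy; rewrite -zy zJ in yJ.
have [_ hI] : circuit M I by apply/circuitP.
have iJ := indep_sub sJy (hI y yI).
by rewrite /indep' (indepM_N iJ).
Qed.


Lemma indep'_aug I J : indep' I -> indep' J -> #|I| < #|J| ->
  exists2 x, x \in J :\: I & indep' (x |: I).
Proof.
move=> iI iJ lt.
have leJ := indep'_le iJ.
have iNI : indep N I.
  case/orP: iI => // /and3P[/circuitP cI eI sIX].
  have := circA cI eI sIX; lia.
case/orP: iJ => [iNJ | /and3P[/circuitP cJ eJ sJX]].
  have [x xJ ixI] := indep_aug iNI iNJ lt.
  by exists x => //; rewrite /indep' ixI.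
have cJr := circA cJ eJ sJX.
case: (cJ) => dJ hJ.
have iJe : indep M (J :\ e) := hJ e eJ.
have cJe : #|J :\ e| = r by have := cardsD1 e J; rewrite eJ; lia.
case: (ltnP #|I| r) => [ltr | ger].
  have lt2 : #|I| < #|J :\ e| by lia.
  have [x /setDP[xJe xI] ixI] := indep_aug iNI (indepM_N iJe) lt2.
  exists x; first by rewrite in_setD xI (subsetP (subsetDl J [set e]) x xJe).
  by rewrite /indep' ixI.
have cI : #|I| = r by lia.
have iMI : indep M I by apply: indepNM => //; lia.
case: (boolP [exists x in J :\: I, indep N (x |: I)]) => [/exists_inP[x xJI ixI] | /exists_inP H].
  by exists x => //; rewrite /indep' ixI.
have H' : forall x, x \in J :\: I -> ~~ indep N (x |: I).
  by move=> x xJI; apply/negP => ix; apply: H; exists x.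
have sIX : I \subset X.
  apply/subsetP => i iIi; apply: (flat_closed fX sJX).
  have rIJ : rank N (I :|: J) = #|I|.
    apply: rank_of_max => //; first exact: subsetUl.
    move=> z; rewrite in_setU => /orP[zI|zJ] zI'; first by rewrite zI in zI'.
    by apply: H'; rewrite in_setD zI' zJ.
  have r1 : rank N (i |: J) <= rank N (I :|: J).
    by apply: rank_mono; rewrite subUset sub1set in_setU iIi subsetUr.
  have r2 : r <= rank N J.
    by rewrite -cJe; apply: indep_le_rank (subsetDl _ _) (indepM_N iJe).
  have r3 : rank N J <= rank N (i |: J) by apply: rank_mono; apply: subsetU1.
  lia.
case eI: (e \in I).
- set I' := I :\ e.
  have iI' : indep M I' := indep_sub (subsetDl _ _) iMI.
  have cI' : #|I| = (#|I'|).+1 by rewrite (cardsD1 e I) eI.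
  have [x xJI ixI'] : exists2 x, x \in J :\: I & indep M (x |: I').
    case: (boolP [exists x in J :\: I, indep M (x |: I')]) => [/exists_inP //| /exists_inP Hn].
    exfalso.
    have rS : rank M (I' :|: (J :\ e)) = #|I'|.
      apply: rank_of_max => //; first exact: subsetUl.
      move=> z; rewrite in_setU => /orP[zI'|zJe] zI''; first by rewrite zI' in zI''.
      apply/negP => iz; apply: Hn; exists z => //.
      move: zJe zI''; rewrite /I' !in_setD1 => /andP[ze zJ]; rewrite ze /= => zI.
      by rewrite in_setD zI zJ.
    have := indep_le_rank (subsetUr I' (J :\ e)) iJe.
    by rewrite rS cJe -cI cI' ltnn.
  have /setDP[xJ xI] := xJI.
  have exI : e |: (x |: I') = x |: I by rewrite setUCA /I' setD1K.
  have dxI : ~~ indep M (x |: I).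
    by rewrite indepMN cardsU1 xI cI add1n ltnn andbF.
  have dxI' : ~~ indep M (e |: (x |: I')) by rewrite exI.
  have [D [cD eD sD]] := circuit_exists ixI' dxI'.
  rewrite exI in sD.
  have sxIX : x |: I \subset X by rewrite subUset sub1set (subsetP sJX x xJ) sIX.
  have cD' := circA cD eD (subset_trans sD sxIX).
  have DxI : D = x |: I.
    by apply/eqP; rewrite eqEcard sD cD' cardsU1 xI cI add1n leqnn.
  exists x => //; rewrite /indep' -DxI; apply/orP; right; apply/and3P; split => //.
    by apply/circuitP.
  by rewrite DxI.
- exists e; first by rewrite in_setD eI eJ.
  have dI : ~~ indep M (e |: I).
    by rewrite indepMN cardsU1 eI cI add1n ltnn andbF.
  have [D [cD eD sD]] := circuit_exists iMI dI.
  have seIX : e |: I \subset X by rewrite subUset sub1set (subsetP sJX e eJ) sIX.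
  have cD' := circA cD eD (subset_trans sD seIX).
  have DeI : D = e |: I.
    by apply/eqP; rewrite eqEcard sD cD' cardsU1 eI cI add1n leqnn.
  rewrite /indep' -DeI; apply/orP; right; apply/and3P; split => //.
    by apply/circuitP.
  by rewrite DeI.
Qed.

Definition N' := @Matroid T indep' indep'0 indep'_sub indep'_aug.

Lemma trunc' : truncation_of M N'.
Proof.
split.
  apply/eqP; rewrite eqn_leq; apply/andP; split.
    by apply/bigmax_leqP => K /andP[_ iK]; exact: indep'_le iK.
  rewrite -rNT; have [K [_ iK cK]] := rank_witness N setT; rewrite -cK.
  by apply: indep_le_rank (subsetT _) _; rewrite /= /indep' iK.
move=> Y; rewrite trR.
have r1 : rank N Y <= rank N' Y.
  have [K [sK iK cK]] := rank_witness N Y; rewrite -cK.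
  by apply: indep_le_rank sK _; rewrite /= /indep' iK.
case: (leqP r (rank N Y)) => h; first lia.
suff r2 : rank N' Y <= rank N Y by lia.
apply/bigmax_leqP => K /andP[sK /orP[iK|/and3P[/circuitP cK eK sKX]]].
  exact: indep_le_rank sK iK.
have cK' := circA cK eK sKX.
case: (cK) => _ hK.
have iKe := indepM_N (hK e eK).
have := indep_le_rank (subset_trans (subsetDl K [set e]) sK) iKe.
have := cardsD1 e K; rewrite eK; lia.
Qed.

Lemma erect_contra C : circuit N C -> e \in C -> C \subset X -> circuit M C ->
  free_erection M N -> False.
Proof.
move=> [dC _] eC sCX cMC [_ Hmax].
have := Hmax N' (or_intror trunc') C.
rewrite /= /indep' eC sCX andbT.
have -> : circuitb M C by apply/circuitP.
by rewrite orbT => /(_ isT); rewrite (negbTE dC).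
Qed.

End Erect.
End Trunc.

Unset Implicit Arguments. Set Strict Implicit.

Theorem lemma3p5 (T : finType) (M : matroid T) (calC : {set {set T}})
  (N : matroid T) :
  (forall C, C \in calC -> circuit M C /\ ~ spanning M C) ->
  free_erection M N ->
  (forall X, cyclic_flat M X -> union_of calC X) ->
  forall X, cyclic_flat N X -> union_of calC X.
Proof.
move=> _ fe hM X [cX fX]; have [cand Hmax] := fe.
suff key : forall e, e \in X -> exists F, [/\ cyclic_flat M F, e \in F & F \subset X].
  exists [set C in calC | C \subset X].
    by apply/subsetP => C; rewrite inE => /andP[].
  apply/setP => y; apply/idP/bigcupP => [yX | [C]].
  - have [F [cfF yF sFX]] := key y yX.
    have [G sG eF] := hM F cfF.
    move: (yF); rewrite eF => /bigcupP[C CG yC].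
    exists C => //; rewrite inE (subsetP sG C CG) /=.
    by apply: subset_trans sFX; rewrite eF; exact: bigcup_sup CG.
  - by rewrite inE => /andP[_ sCX] yC; exact: subsetP sCX y yC.
move=> e eXm.
case: cand => [eqI | trN].
- exists X; split => //.
  have eqR : forall Y, rank N Y = rank M Y.
    by move=> Y; rewrite /rank; apply: eq_bigl => I; rewrite eqI.
  have eqC : forall C, circuit N C -> circuit M C.
    move=> C [h1 h2]; split; first by rewrite -eqI.
    by move=> x /h2; rewrite eqI.
  split.
    by case: cX => G hG XG; exists G => // C /hG /eqC.
  by move=> x /fX; rewrite !eqR.
- case: (eqVneq X setT) => [XT | XnT].
  + exists setT; split => //; rewrite ?in_setT ?subsetT //; last by rewrite XT subxx.
    split; last by move=> x; rewrite in_setT.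
    exists [set C | circuitb M C].
      by move=> C; rewrite inE => /circuitP.
    apply/setP => y; rewrite in_setT; symmetry; apply/bigcupP.
    have yX : y \in X by rewrite XT in_setT.
    case: cX => G hG XG; rewrite XG in yX.
    case/bigcupP: yX => C CG yC.
    have [D [cD yD _]] := Ncirc_Mcirc trN (hG C CG) yC.
    by exists D => //; rewrite inE; apply/circuitP.
  + case: (cX) => G hG XG.
    have [C CG eC] : exists2 C, C \in G & e \in C by apply/bigcupP; rewrite -XG.
    have sCX : C \subset X by rewrite XG; exact: bigcup_sup.
    have cC := hG C CG.
    have nsX : ~~ ([set: T] \subset X).
      by apply/negP => sTX; move: XnT; rewrite eqEsubset subsetT sTX.
    have [y _ yX] := subsetPn nsX.
    have rX : rank N X <= rank M setT.
      have h1 := fX y yX; have h2 := rank_mono N (subsetT (y |: X)).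
      rewrite (rNT trN) in h2; rewrite -ltnS; exact: leq_trans h1 h2.
    have cMC : circuit M C.
      case: (cC) => dC hCx.
      have rC : #|C :\ e| <= rank M setT.
        apply: leq_trans rX; apply: indep_le_rank (hCx e eC).
        exact: subset_trans (subsetDl _ _) sCX.
      split; first by rewrite (indepMN trN) (negbTE dC).
      move=> x xC; apply: (indepNM trN (hCx x xC)).
      have h1 := cardsD1 x C; have h2 := cardsD1 e C.
      rewrite xC in h1; rewrite eC in h2; lia.
    case: (boolP [exists D : {set T}, [&& circuitb M D, e \in D, D \subset X & #|D| <= rank M setT]])
      => [/existsP[D /and4P[/circuitP cD eD sDX leD]] | /existsP nA].
    * have [F [cfF sDF hF]] := closure_cf cD.
      exists F; split => //; first exact: subsetP sDF e eD.
      apply/subsetP => z zF; apply: (flat_closed fX sDX).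
      have ry := hF z zF.
      have rD : rank M D < rank M setT.
        apply: leq_trans leD; rewrite ltn_neqAle rank_le_card andbT.
        by apply/negP => /eqP /rank_indep; case: cD => /negP.
      have e1 := trR trN D; have e2 := trR trN (z |: D).
      lia.
    * exfalso.
      apply: (erect_contra (e:=e) (X:=X) trN fX _ cC eC sCX cMC fe).
      move=> D cD eD sD; rewrite ltnNge; apply/negP => le; apply: nA; exists D.
      by apply/and4P; split => //; apply/circuitP.
Qed.
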